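(* Let $A=[a_{ij}]\in\{0,1\}^{N\times N}$ be the adjacency matrix of a static contact graph on nodes $\{1,\dots,N\}$ (with $a_{ii}=0$), let $\beta_0>0$, $\delta>0$, $\kappa>0$, $0\le\beta_a<\beta_0$, and set \[ \beta_{eq}=\beta_0\frac{\beta_a/\kappa}{1+\beta_a/\kappa}+\beta_a\frac{1}{1+\beta_a/\kappa}. \] If $(p_i^{ss},q_i^{ss})_{i=1}^N$ is a steady state of the SAIS system \[ \dot p_i=\beta_0(1-p_i-q_i)\sum_{j=1}^N a_{ij}p_j+\beta_a q_i\sum_{j=1}^N a_{ij}p_j-\delta p_i,\qquad \dot q_i=\kappa(1-p_i-q_i)\sum_{j=1}^N a_{ij}p_j-\beta_a q_i\sum_{j=1}^N a_{ij}p_j, \] then its infection probabilities satisfy the steady-state equations of the N-intertwined SIS model $\dot p_i=\beta(1-p_i)\sum_j a_{ij}p_j-\delta p_i$ with infection rate $\beta=\beta_{eq}$, namely \[ \beta_{eq}(1-p_i^{ss})\sum_{j=1}^N a_{ij}p_j^{ss}-\delta p_i^{ss}=0,\qquad\text{equivalently}\qquad \frac{\beta_{eq}}{\delta}\sum_{j=1}^N a_{ij}p_j^{ss}=\frac{p_i^{ss}}{1-p_i^{ss}}\ (p_i^{ss}\neq1), \] for all $i\in\{1,\dots,N\}$.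
   Context: $p_i$ and $q_i$ are the (mean-field) probabilities that individual $i$ is infected and alert; $a_{ij}=1$ iff individual $j$ is a neighbor of individual $i$. $\beta_0$: infection rate of susceptible individuals; $\beta_a$: infection rate of alert individuals; $\kappa$: alerting rate; $\delta$: curing rate. *)

(* Defs.v *)
From mathcomp Require Import all_boot all_order all_algebra.
Set Implicit Arguments. Unset Strict Implicit. Unset Printing Implicit Defensive.
Import Order.TTheory GRing.Theory Num.Theory.
Local Open Scope ring_scope.

Definition adjacency01 (R : numDomainType) (N : nat) (A : 'M[R]_N) : Prop :=
  (forall i j, A i j = 0 \/ A i j = 1) /\ (forall i, A i i = 0).

Definition nbsum (R : numDomainType) (N : nat) (A : 'M[R]_N) (p : 'I_N -> R)
  (i : 'I_N) : R := \sum_(j < N) A i j * p j.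

Definition SAIS_dp (R : numDomainType) (N : nat) (A : 'M[R]_N)
  (beta0 betaa delta : R) (p q : 'I_N -> R) (i : 'I_N) : R :=
  beta0 * (1 - p i - q i) * nbsum A p i + betaa * q i * nbsum A p i - delta * p i.

Definition SAIS_dq (R : numDomainType) (N : nat) (A : 'M[R]_N)
  (kappa betaa : R) (p q : 'I_N -> R) (i : 'I_N) : R :=
  kappa * (1 - p i - q i) * nbsum A p i - betaa * q i * nbsum A p i.

Definition SAIS_steady (R : numDomainType) (N : nat) (A : 'M[R]_N)
  (beta0 betaa kappa delta : R) (p q : 'I_N -> R) : Prop :=
  forall i, SAIS_dp A beta0 betaa delta p q i = 0 /\ SAIS_dq A kappa betaa p q i = 0.

Definition beta_eq (R : numFieldType) (beta0 betaa kappa : R) : R :=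
  beta0 * ((betaa / kappa) / (1 + betaa / kappa)) + betaa * (1 / (1 + betaa / kappa)).

(* Main.v *)
Require Import Defs.
From mathcomp Require Import all_boot all_order all_algebra.
From mathcomp Require Import ring lra.
Import Order.TTheory GRing.Theory Num.Theory.
Local Open Scope ring_scope.

Theorem theorem4 (R : realFieldType) (N : nat) (A : 'M[R]_N)
  (beta0 betaa kappa delta : R) (p q : 'I_N -> R) :
  adjacency01 A ->
  0 < beta0 -> 0 < delta -> 0 < kappa -> 0 <= betaa -> betaa < beta0 ->
  SAIS_steady A beta0 betaa kappa delta p q ->
  forall i : 'I_N,
    beta_eq beta0 betaa kappa * (1 - p i) * nbsum A p i - delta * p i = 0 /\
    (p i != 1 ->
       beta_eq beta0 betaa kappa / delta * nbsum A p i = p i / (1 - p i)).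
Proof.
move=> _ hb0 hd hk ha hab st i.
have [dp dq] := st i.
rewrite /SAIS_dp in dp; rewrite /SAIS_dq in dq.
set S := nbsum A p i in dp dq *.
set P := p i in dp dq *; set Q := q i in dp dq *.
have hk0 : kappa != 0 by rewrite gt_eqF.
have hka : kappa + betaa != 0 by rewrite gt_eqF //; lra.
have hka' : 1 + betaa / kappa != 0.
  rewrite gt_eqF //; have : 0 <= betaa / kappa by rewrite divr_ge0 // ltW.
  lra.
have be : beta_eq beta0 betaa kappa = betaa * (beta0 + kappa) / (kappa + betaa).
  by rewrite /beta_eq; field; rewrite hk0 hka /= -?hka'.
have dP : delta * P = beta0 * (1 - P - Q) * S + betaa * Q * S.
  by rewrite -[LHS]addr0 -dp; ring.
have first : beta_eq beta0 betaa kappa * (1 - P) * S - delta * P = 0.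
  rewrite dP be.
  have -> : betaa * (beta0 + kappa) / (kappa + betaa) * (1 - P) * S -
    (beta0 * (1 - P - Q) * S + betaa * Q * S) =
    (betaa - beta0) * (kappa * (1 - P - Q) * S - betaa * Q * S) / (kappa + betaa).
    by field.
  by rewrite dq mulr0 mul0r.
split=> // hP.
have h1 : 1 - P != 0 by rewrite subr_eq0 eq_sym.
have hd0 : delta != 0 by rewrite gt_eqF.
move: first; set b := beta_eq _ _ _ => first.
have e : b * (1 - P) * S = delta * P by apply/eqP; rewrite -subr_eq0 first.
apply: (mulIf h1); rewrite mulfVK //.
apply: (mulfI hd0).
by rewrite -e; field.
Qed.
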